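(* Let $N\ge1$, $h,\beta,\epsilon>0$, let $\boldsymbol{\varrho}_{k-1}\in\mathbb{R}^N_{\ge0}$ be a probability vector, $\boldsymbol{\psi}_{k-1}\in\mathbb{R}^N$, and $\boldsymbol{C}_k\in\mathbb{R}^{N\times N}$ with entries in $[0,\infty)$. Let $\boldsymbol{\Gamma}_k:=\exp(-\boldsymbol{C}_k/(2\epsilon))$ and $\boldsymbol{\xi}_{k-1}:=\exp(-\beta\boldsymbol{\psi}_{k-1}-\mathbf{1})$ (entrywise). Then the iteration, for $\ell=1,2,\dots$, $$\boldsymbol{z}_{\ell+1}=\Big(\boldsymbol{\xi}_{k-1}\oslash\big(\boldsymbol{\Gamma}_k^{\top}\big(\boldsymbol{\varrho}_{k-1}\oslash(\boldsymbol{\Gamma}_k\boldsymbol{z}_\ell)\big)\big)\Big)^{\frac{1}{1+\beta\epsilon/h}}$$ (equivalently $\boldsymbol{z}_{\ell+1}=(\boldsymbol{\xi}_{k-1}\oslash(\boldsymbol{\Gamma}_k^\top\boldsymbol{y}_\ell))^{1/(1+\beta\epsilon/h)}$ with $\boldsymbol{y}_\ell=\boldsymbol{\varrho}_{k-1}\oslash(\boldsymbol{\Gamma}_k\boldsymbol{z}_\ell)$) defines a map of $\mathbb{R}^N_{>0}$ into itself that is strictly contractive with respect to the Thompson metric on $\mathbb{R}^N_{>0}$, and it admits a unique fixed point $\boldsymbol{z}^{\rm opt}\in\mathbb{R}^N_{>0}$.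
   Context: Thompson metric on the positive orthant: for $\boldsymbol{z},\tilde{\boldsymbol{z}}\in\mathbb{R}^N_{>0}$, $d_T(\boldsymbol{z},\tilde{\boldsymbol{z}})=\log\max\{\max_i \boldsymbol{z}_i/\tilde{\boldsymbol{z}}_i,\ \max_i\tilde{\boldsymbol{z}}_i/\boldsymbol{z}_i\}$; $(\mathbb{R}^N_{>0},d_T)$ is a complete metric space. Strictly contractive means $d_T(\boldsymbol{\theta}(\boldsymbol{z}),\boldsymbol{\theta}(\tilde{\boldsymbol{z}}))\le c\,d_T(\boldsymbol{z},\tilde{\boldsymbol{z}})$ for some $c<1$. Notation: $\oslash$ is entrywise division; $\exp$ and powers are entrywise; $\mathbf{1}$ is the all-ones vector. (The iteration is the block-coordinate scheme used to solve $\boldsymbol{y}\odot(\boldsymbol{\Gamma}_k\boldsymbol{z})=\boldsymbol{\varrho}_{k-1}$, $\boldsymbol{z}\odot(\boldsymbol{\Gamma}_k^\top\boldsymbol{y})=\boldsymbol{\xi}_{k-1}\odot\boldsymbol{z}^{-\beta\epsilon/h}$ arising in an entropically regularized JKO proximal step.) *)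

(* Defs.v *)
From HB Require Import structures.
From mathcomp Require Import all_boot all_order all_algebra.
From mathcomp Require Import all_classical all_reals all_analysis.
Set Implicit Arguments. Unset Strict Implicit. Unset Printing Implicit Defensive.
Import Order.TTheory GRing.Theory Num.Theory.
Local Open Scope ring_scope.

Definition pos_vec (R : realType) (N : nat) (z : 'cV[R]_N) : Prop :=
  forall i, 0 < z i 0.

(* Thompson metric: log max { max_i z_i / w_i , max_i w_i / z_i }
   (the inner maxima are taken with seed 0, harmless since all ratios are > 0
   on the positive orthant and N >= 1). *)
Definition thompson (R : realType) (N : nat) (z w : 'cV[R]_N) : R :=
  ln (Num.max (\big[Num.max/0]_(i < N) (z i 0 / w i 0))
              (\big[Num.max/0]_(i < N) (w i 0 / z i 0))).

Definition Gammak (R : realType) (N : nat) (eps : R) (C : 'M[R]_N) : 'M[R]_N :=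
  \matrix_(i, j) expR (- C i j / (2 * eps)).

Definition xik (R : realType) (N : nat) (beta : R) (psi : 'cV[R]_N) : 'cV[R]_N :=
  \col_i expR (- beta * psi i 0 - 1).

Definition theta_map (R : realType) (N : nat) (h beta eps : R)
    (rho psi : 'cV[R]_N) (C : 'M[R]_N) (z : 'cV[R]_N) : 'cV[R]_N :=
  let G := Gammak eps C in
  let y := \col_i (rho i 0 / (G *m z) i 0) in
  let w := G^T *m y in
  \col_i ((xik beta psi i 0 / w i 0) `^ (1 / (1 + beta * eps / h))).

(* Main.v *)
Require Import Defs.
From HB Require Import structures.
From mathcomp Require Import all_boot all_order all_algebra.
From mathcomp Require Import all_classical all_reals all_analysis.
From mathcomp Require Import ring lra.
Import Order.TTheory GRing.Theory Num.Theory.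
Local Open Scope ring_scope.

HB.instance Definition _ (R : realType) (m n : nat) := Complete.on 'M[R]_(m,n).

Definition gmap (R : realType) (N : nat) (h beta eps : R)
    (rho psi : 'cV[R]_N) (C : 'M[R]_N) (u : 'cV[R]_N) : 'cV[R]_N :=
  \col_i ln (theta_map h beta eps rho psi C (\col_j expR (u j 0)) i 0).
Arguments gmap {R N}.

HB.instance Definition _ (R : realType) (N : nat) (h beta eps : R)
    (rho psi : 'cV[R]_N) (C : 'M[R]_N) :=
  isFun.Build _ _ setT setT (gmap h beta eps rho psi C) (fun _ _ => I).

Section helpers.
Variables (R : realType) (N : nat) (h beta eps : R) (rho psi : 'cV[R]_N) (C : 'M[R]_N).
Hypotheses (hN : (1 <= N)%N) (hh : 0 < h) (hbeta : 0 < beta) (heps : 0 < eps)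
    (hrho_nn : forall i, 0 <= rho i 0)
    (hrho_sum : \sum_(i < N) rho i 0 = 1).

Let G := Gammak eps C.
Let a := 1 / (1 + beta * eps / h).
Let yv (z : 'cV[R]_N) : 'cV[R]_N := \col_i (rho i 0 / (G *m z) i 0).
Let W (z : 'cV[R]_N) : 'cV[R]_N := G^T *m yv z.
Let th := theta_map h beta eps rho psi C.

Lemma mulE (A : 'M[R]_N) (x : 'cV[R]_N) i : (A *m x) i 0 = \sum_k A i k * x k 0.
Proof. by rewrite mxE. Qed.

Lemma yvE z j : yv z j 0 = rho j 0 / (G *m z) j 0.
Proof. by rewrite mxE. Qed.

Lemma a_gt0 : 0 < a.
Proof.
rewrite /a divr_gt0 // ltr_wpDr // ?ltW // divr_gt0 // mulr_gt0 //.
Qed.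

Lemma a_lt1 : a < 1.
Proof.
have hp : 0 < beta * eps / h by rewrite divr_gt0 // mulr_gt0.
rewrite /a ltr_pdivrMr; last by rewrite ltr_wpDr // ltW.
by rewrite mul1r ltrDl.
Qed.

Lemma G_gt0 i j : 0 < G i j.
Proof. by rewrite /G /Gammak mxE expR_gt0. Qed.

Lemma sum_pos (F : 'I_N -> R) : (forall k, 0 < F k) -> 0 < \sum_k F k.
Proof.
move=> HF; pose k0 := Ordinal hN.
rewrite (bigD1 k0) //=.
have : 0 <= \sum_(i | i != k0) F i by apply: sumr_ge0 => i _; exact: ltW.
have := HF k0. lra.
Qed.

Lemma Gz_pos z i : pos_vec z -> 0 < (G *m z) i 0.
Proof.
move=> hz; rewrite mxE; apply: sum_pos => k; by rewrite mulr_gt0 ?G_gt0.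
Qed.

Lemma yv_ge0 z j : pos_vec z -> 0 <= yv z j 0.
Proof. by move=> hz; rewrite mxE divr_ge0 // ltW // Gz_pos. Qed.

Lemma W_pos z i : pos_vec z -> 0 < W z i 0.
Proof.
move=> hz; rewrite /W mxE lt_def sumr_ge0 ?andbT; last first.
  by move=> k _; rewrite mulr_ge0 // ?yv_ge0 // mxE ltW // G_gt0.
apply/eqP => H0.
have Hge k : 0 <= G^T i k * yv z k 0.
  by rewrite mulr_ge0 ?yv_ge0 // mxE ltW // G_gt0.
have H1 := psumr_eq0P (fun k _ => Hge k) H0.
have : \sum_(k < N) rho k 0 = 0.
  apply: big1 => k _.
  have hG : (G^T i k == 0) = false by rewrite mxE gt_eqF // G_gt0.
  move: (H1 k isT) => /eqP; rewrite mulf_eq0 hG /= mxE mulf_eq0 invr_eq0.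
  by rewrite (gt_eqF (Gz_pos _ _ hz)) orbF => /eqP.
by rewrite hrho_sum => /eqP; rewrite oner_eq0.
Qed.

Lemma th_E z i : th z i 0 = (xik beta psi i 0 / W z i 0) `^ a.
Proof. by rewrite /th /theta_map mxE. Qed.

Lemma th_pos z : pos_vec z -> pos_vec (th z).
Proof.
move=> hz i; rewrite th_E powR_gt0 // divr_gt0 ?W_pos //.
by rewrite /xik mxE expR_gt0.
Qed.

Lemma div_mono (p q r K : R) : 0 < p -> 0 < q -> 0 <= r -> 0 < K ->
  p <= K * q -> r / q <= K * (r / p).
Proof.
move=> hp hq hr hK hpq.
have -> : r / q = (p / q) * (r / p).
  by field; apply/andP; split; rewrite gt_eqF.
apply: ler_wpM2r; first by rewrite divr_ge0 // ltW.
by rewrite ler_pdivrMr.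
Qed.

Lemma key z w K : pos_vec z -> pos_vec w -> 0 < K ->
  (forall i, z i 0 <= K * w i 0) -> forall i, th z i 0 <= K `^ a * th w i 0.
Proof.
move=> hz hw hK hzw i.
have Gz_le j : (G *m z) j 0 <= K * (G *m w) j 0.
  rewrite !mulE mulr_sumr; apply: ler_sum => k _.
  by rewrite mulrCA; apply: ler_wpM2l; [exact: ltW (G_gt0 _ _)|].
have y_le j : yv w j 0 <= K * yv z j 0.
  by rewrite !yvE; apply: div_mono => //; rewrite Gz_pos.
have W_le : W w i 0 <= K * W z i 0.
  rewrite /W !mulE mulr_sumr; apply: ler_sum => k _.
  rewrite mulrCA; apply: ler_wpM2l; last exact: y_le.
  by rewrite mxE ltW // G_gt0.
have xi0 : 0 <= xik beta psi i 0 by rewrite mxE expR_ge0.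
have Hle := @div_mono (W w i 0) (W z i 0) (xik beta psi i 0) K (W_pos w i hw) (W_pos z i hz) xi0 hK W_le.
have q0 : 0 <= xik beta psi i 0 / W w i 0 by rewrite divr_ge0 // ltW // W_pos.
rewrite !th_E -(powRM _ (ltW hK) q0).
apply: ge0_ler_powR; rewrite ?nnegrE //; first exact: ltW a_gt0.
- by rewrite divr_ge0 // ltW // W_pos.
- by rewrite mulr_ge0 // ltW.
Qed.

Lemma entry_le (x : 'cV[R]_N) j : `|x j 0| <= `|x|.
Proof.
by rewrite [leRHS]/Num.Def.normr /= mx_normrE; apply/bigmax_geP; right => /=; exists (j, 0).
Qed.

Lemma gmapE u i :
  gmap h beta eps rho psi C u i 0 = ln (th (\col_j expR (u j 0)) i 0).
Proof. by rewrite /gmap mxE. Qed.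

Lemma subE (A B : 'cV[R]_N) i : (A - B) i 0 = A i 0 - B i 0.
Proof. by rewrite !mxE. Qed.

Lemma g_half (u v : 'cV[R]_N) i :
  gmap h beta eps rho psi C u i 0 - gmap h beta eps rho psi C v i 0 <= a * `|u - v|.
Proof.
set d := `|u - v|.
have pE (x : 'cV[R]_N) : pos_vec (\col_j expR (x j 0)) by move=> j; rewrite mxE expR_gt0.
have hK : 0 < expR d by exact: expR_gt0.
have := @key _ _ _ (pE u) (pE v) hK.
have Hb : forall j, (\col_j0 expR (u j0 0)) j 0 <= expR d * (\col_j0 expR (v j0 0)) j 0.
  move=> j; rewrite !mxE -expRD ler_expR.
  have := entry_le (u - v) j; rewrite !mxE ler_norml => /andP[_]; rewrite /d; lra.
move=> /(_ Hb i) Hk.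
rewrite [X in X - _](gmapE u i) [X in _ - X](gmapE v i).
have p1 := th_pos _ (pE u) i; have p2 := th_pos _ (pE v) i.
have p3 : 0 < expR d `^ a by rewrite powR_gt0.
have H : ln (th (\col_j expR (u j 0)) i 0) <= ln (expR d `^ a * th (\col_j expR (v j 0)) i 0).
  rewrite ler_ln ?posrE.
  all: try first [exact: Hk | exact: p1 | exact: (mulr_gt0 p3 p2)].
have p3' : expR d `^ a \is Num.pos by rewrite posrE; exact: p3.
have p2' : th (\col_j expR (v j 0)) i 0 \is Num.pos by rewrite posrE; exact: p2.
rewrite (lnM p3' p2') ln_powR expRK in H.
by rewrite lerBlDr.
Qed.

Lemma g_contr (u v : 'cV[R]_N) :
  `|gmap h beta eps rho psi C u - gmap h beta eps rho psi C v| <= a * `|u - v|.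
Proof.
rewrite [leLHS]/Num.Def.normr /= mx_normrE.
apply: bigmax_le => [|[i j] _] /=; first by rewrite mulr_ge0 // ltW // a_gt0.
rewrite (ord1 j) subE ler_norml; apply/andP; split; last first.
  exact: g_half u v i.
have H := g_half v u i; rewrite distrC in H.
by rewrite lerNl opprB.
Qed.

Lemma pE (x : 'cV[R]_N) : pos_vec (\col_j expR (x j 0)).
Proof. by move=> j; rewrite mxE expR_gt0. Qed.

Lemma bigM_ge (f g : 'I_N -> R) i :
  f i <= Num.max (\big[Num.max/0]_(k < N) f k) (\big[Num.max/0]_(k < N) g k).
Proof. by apply: le_trans (le_bigmax (0:R) f i) _; rewrite le_max lexx. Qed.

Lemma bigM_ge2 (f g : 'I_N -> R) i :
  g i <= Num.max (\big[Num.max/0]_(k < N) f k) (\big[Num.max/0]_(k < N) g k).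
Proof. by apply: le_trans (le_bigmax (0:R) g i) _; rewrite le_max lexx orbT. Qed.

Lemma main_sec :
  (forall z, pos_vec z -> pos_vec (th z)) /\
  (exists c : R, 0 <= c /\ c < 1 /\
     forall z w, pos_vec z -> pos_vec w ->
       thompson (th z) (th w) <= c * thompson z w) /\
  (exists zopt, pos_vec zopt /\ th zopt = zopt /\
     forall z, pos_vec z -> th z = z -> z = zopt).
Proof.
pose k0 := Ordinal hN.
split; first exact: th_pos.
split.
  exists a; split; first exact: ltW a_gt0.
  split; first exact: a_lt1.
  move=> z w hz hw; rewrite /thompson.
  set M := Num.max (\big[Num.max/0]_(i < N) (z i 0 / w i 0)) _.
  have Mpos : 0 < M.
    exact: lt_le_trans (divr_gt0 (hz k0) (hw k0)) (bigM_ge _ _ k0).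
  have b1 i : z i 0 <= M * w i 0.
    rewrite -ler_pdivrMr; [exact: bigM_ge | exact: hw].
  have b2 i : w i 0 <= M * z i 0.
    rewrite -ler_pdivrMr; [exact: bigM_ge2 | exact: hz].
  have c1 := key _ _ _ hz hw Mpos b1; have c2 := key _ _ _ hw hz Mpos b2.
  have Ma : 0 < M `^ a by apply: powR_gt0.
  set M' := Num.max _ _.
  have M'pos : 0 < M'.
    exact: lt_le_trans (divr_gt0 (th_pos _ hz k0) (th_pos _ hw k0)) (bigM_ge _ _ k0).
  have bound : M' <= M `^ a.
    rewrite /M' ge_max; apply/andP; split; apply: bigmax_le => [|i _].
    - exact: ltW Ma.
    - rewrite ler_pdivrMr; [exact: c1 | exact: th_pos].
    - exact: ltW Ma.
    - rewrite ler_pdivrMr; [exact: c2 | exact: th_pos].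
  rewrite -ln_powR ler_ln ?posrE; first exact: bound.
  all: try first [exact: M'pos | exact: Ma].
have hc : is_contraction (gmap h beta eps rho psi C : {fun setT >-> setT}).
  exists (NngNum (ltW a_gt0)); split; first exact: a_lt1.
  move=> [u v] _ /=; exact: g_contr.
have [p _ hp] := @banach_fixed_point _ _ _ _ hc closedT (ex_intro _ 0 I).
have hpi i : p i 0 = ln (th (\col_j expR (p j 0)) i 0).
  by rewrite {1}hp [LHS]gmapE.
have fixE : th (\col_j expR (p j 0)) = \col_j expR (p j 0).
  apply/matrixP => i j; rewrite (ord1 j) [RHS]mxE hpi lnK; first by [].
  rewrite posrE; exact: th_pos _ (pE p) i.
exists (\col_j expR (p j 0)); split; first exact: pE.
split; first exact: fixE.
move=> z hz hfix.
pose u := \col_j ln (z j 0).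
have Ez : \col_j expR (u j 0) = z.
  by apply/matrixP => i j; rewrite (ord1 j) !mxE lnK // posrE.
have gu : u = gmap h beta eps rho psi C u.
  apply/matrixP => i j; rewrite (ord1 j) [RHS]gmapE Ez hfix.
  by rewrite /u mxE.
have := contraction_fixpoint_unique hc I I gu hp.
by move=> up; rewrite -Ez up.
Qed.

End helpers.

Theorem theorem2 (R : realType) (N : nat) (hN : (1 <= N)%N)
    (h beta eps : R) (hh : 0 < h) (hbeta : 0 < beta) (heps : 0 < eps)
    (rho psi : 'cV[R]_N) (C : 'M[R]_N)
    (hrho_nn : forall i, 0 <= rho i 0)
    (hrho_sum : \sum_(i < N) rho i 0 = 1)
    (hC : forall i j, 0 <= C i j) :
  let theta := theta_map h beta eps rho psi C in
  (forall z, pos_vec z -> pos_vec (theta z)) /\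
  (exists c : R, 0 <= c /\ c < 1 /\
     forall z w, pos_vec z -> pos_vec w ->
       thompson (theta z) (theta w) <= c * thompson z w) /\
  (exists zopt, pos_vec zopt /\ theta zopt = zopt /\
     forall z, pos_vec z -> theta z = z -> z = zopt).
Proof.
move=> theta; apply: main_sec; assumption.
Qed.
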